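(* Let $F$ be a field with separable closure $F_s$ and absolute Galois group $\Gamma=\mathrm{Gal}(F_s/F)$. Let $W(D_4)\subset\mathrm{O}_4(\mathbb R)$ be the group of matrices $D\cdot P(\pi)$ with $D=\mathrm{diag}(\varepsilon_1,\dots,\varepsilon_4)$, $\varepsilon_i=\pm1$, $\prod\varepsilon_i=1$, $P(\pi)$ the permutation matrix of $\pi\in\mathfrak S_4$, and let $\tilde\mu$, $\tilde\rho$ be the trialitarian automorphisms given by conjugation by $$\mu=\tfrac12\begin{pmatrix}1&1&1&-1\\1&1&-1&1\\1&-1&1&1\\1&-1&-1&-1\end{pmatrix},\qquad \rho=\tfrac12\begin{pmatrix}-1&1&1&1\\-1&-1&1&-1\\-1&-1&-1&1\\-1&1&-1&-1\end{pmatrix}.$$ Let $\xi\in H^1(F,W(D_4))$ be a class fixed by $\tilde\mu_*$. Then there exists $\alpha\in\{\tilde\mu,\tilde\rho\}$ such that $\xi$ lies in the image of the map $H^1(F,\mathrm{Fix}(\alpha))\to H^1(F,W(D_4))$ induced by the inclusion $\mathrm{Fix}(\alpha)\subset W(D_4)$.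
   Context: For a finite group $G$ (with trivial $\Gamma$-action), $H^1(F,G)$ is the set of continuous homomorphisms $\Gamma\to G$ modulo conjugation by elements of $G$. An automorphism $\alpha$ of $W(D_4)$ acts on $H^1(F,W(D_4))$ by $\alpha_*[\varphi]=[\alpha\circ\varphi]$; this action depends only on the class of $\alpha$ modulo inner automorphisms. $\mathrm{Fix}(\alpha)=\{x\in W(D_4)\mid\alpha(x)=x\}$. A trialitarian automorphism is a non-inner automorphism of order $3$. *)

(* Defs.v *)
From HB Require Import structures.
From mathcomp Require Import all_boot all_order all_algebra all_fingroup all_field.

Set Implicit Arguments.
Unset Strict Implicit.
Unset Printing Implicit Defensive.

Import GRing.Theory.
Local Open Scope ring_scope.

Notation mx4 := 'M[rat]_4.

Definition mx_of_ints (s : seq (seq int)) : mx4 :=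
  \matrix_(i < 4, j < 4) ((nth 0%Z (nth [::] s i) j)%:~R : rat).

Definition WD4 : pred mx4 := fun A =>
  [exists s : 'S_4, exists e : {ffun 'I_4 -> bool},
     (\prod_(i < 4) (-1 : rat) ^+ e i == 1) &&
     (A == diag_mx (\row_(i < 4) (-1 : rat) ^+ e i) *m perm_mx s)].

Definition mu : mx4 :=
  (1 / 2 : rat) *: mx_of_ints
    [:: [:: 1; 1; 1; -1]; [:: 1; 1; -1; 1]; [:: 1; -1; 1; 1]; [:: 1; -1; -1; -1]]%Z.

Definition rho : mx4 :=
  (1 / 2 : rat) *: mx_of_ints
    [:: [:: -1; 1; 1; 1]; [:: -1; -1; 1; -1]; [:: -1; -1; -1; 1]; [:: -1; 1; -1; -1]]%Z.

Definition conjm (m : mx4) (A : mx4) : mx4 := m * A * m^-1.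

Definition mut : mx4 -> mx4 := conjm mu.
Definition rhot : mx4 -> mx4 := conjm rho.

Definition Fix (alpha : mx4 -> mx4) : pred mx4 := fun x => WD4 x && (alpha x == x).

Definition hom_into (gT : finGroupType) (G : {set gT}) (H : pred mx4)
    (phi : gT -> mx4) : Prop :=
  (forall x, x \in G -> H (phi x)) /\
  (forall x y, x \in G -> y \in G -> phi (x * y)%g = phi x * phi y).

(* phi and psi are conjugate by an element of W(D_4), i.e. define the same
   class in H^1(-, W(D_4)). *)
Definition W_conjugate (gT : finGroupType) (G : {set gT})
    (phi psi : gT -> mx4) : Prop :=
  exists2 g : mx4, WD4 g & forall x, x \in G -> psi x = g * phi x * g^-1.

(* Main.v *)
Require Import Defs.
From HB Require Import structures.
From mathcomp Require Import all_boot all_order all_algebra all_fingroup all_field.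

Local Open Scope ring_scope.
Import GRing.Theory.

Definition matF := nat -> nat -> int.
Definition sum4 (f : nat -> int) : int := f 0%N + f 1%N + f 2%N + f 3%N.
Definition mulF (f g : matF) : matF := fun i j => sum4 (fun k => f i k * g k j).
Definition eqF (f g : matF) : bool :=
  all (fun i => all (fun j => f i j == g i j) (iota 0 4)) (iota 0 4).
Definition code := seq (nat * bool).
Definition tab (c : code) : matF := fun i j =>
  let p := nth (0%N, false) c i in if p.1 == j then (if p.2 then -1 else 1) else 0.
Definition codemul (c d : code) : code :=
  map (fun p => let q := nth (0%N,false) d p.1 in (q.1, xorb p.2 q.2)) c.
Definition codeinv (c : code) : code :=
  map (fun j => let k := index j (map fst c) in (k, nth false (map snd c) k)) (iota 0 4).
Definition conjc (g h : code) := codemul (codemul g h) (codeinv g).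
Definition valid (c : code) : bool :=
  [&& size c == 4%N, uniq (map fst c), all (fun p => p.1 < 4)%N c & ~~ odd (count snd c)].
Definition P8 : seq (nat * bool) := [seq (k, b) | k <- iota 0 4, b <- [:: false; true]].
Fixpoint codes (n : nat) : seq code :=
  if n is n'.+1 then [seq p :: c | p <- P8, c <- codes n'] else [:: [::]].
Definition Wlist := filter valid (codes 4).
Definition muL := [:: [:: 1; 1; 1; -1]; [:: 1; 1; -1; 1]; [:: 1; -1; 1; 1]; [:: 1; -1; -1; -1]]%Z.
Definition rhoL := [:: [:: -1; 1; 1; 1]; [:: -1; -1; 1; -1]; [:: -1; -1; -1; 1]; [:: -1; 1; -1; -1]]%Z.
Definition ofL (s : seq (seq int)) : matF := fun i j => nth 0%Z (nth [::] s i) j.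
Definition muF := ofL muL.
Definition rhoF := ofL rhoL.
Definition hyp g h := let k := conjc g h in eqF (mulF muF (tab h)) (mulF (tab k) muF).
Definition concl w a h := let k := conjc w h in eqF (mulF a (tab k)) (mulF (tab k) a).
Definition cands : seq (code * bool) := [:: ([:: (1%N, false); (3%N, false); (0%N, true); (2%N, true)], false);
  ([:: (1%N, false); (0%N, true); (2%N, false); (3%N, true)], true);
  ([:: (2%N, true); (3%N, true); (0%N, false); (1%N, false)], false);
  ([:: (3%N, false); (1%N, true); (2%N, true); (0%N, false)], true);
  ([:: (2%N, false); (0%N, true); (3%N, false); (1%N, true)], true);
  ([:: (1%N, true); (3%N, true); (0%N, true); (2%N, true)], true);
  ([:: (0%N, true); (3%N, true); (2%N, false); (1%N, false)], false);
  ([:: (0%N, false); (1%N, true); (2%N, false); (3%N, true)], false);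
  ([:: (0%N, true); (1%N, true); (2%N, false); (3%N, false)], false);
  ([:: (1%N, true); (0%N, false); (3%N, true); (2%N, false)], true);
  ([:: (2%N, false); (0%N, false); (3%N, true); (1%N, true)], true);
  ([:: (2%N, true); (1%N, true); (3%N, true); (0%N, true)], true);
  ([:: (2%N, true); (1%N, false); (0%N, false); (3%N, true)], true);
  ([:: (3%N, true); (2%N, true); (0%N, false); (1%N, false)], true);
  ([:: (0%N, true); (1%N, false); (2%N, false); (3%N, true)], false);
  ([:: (1%N, false); (0%N, false); (2%N, false); (3%N, false)], false);
  ([:: (2%N, false); (1%N, true); (0%N, false); (3%N, true)], false);
  ([:: (0%N, true); (2%N, false); (3%N, false); (1%N, true)], true);
  ([:: (1%N, true); (3%N, true); (2%N, false); (0%N, false)], true);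
  ([:: (1%N, false); (2%N, false); (3%N, false); (0%N, false)], true);
  ([:: (1%N, false); (0%N, true); (3%N, true); (2%N, false)], true);
  ([:: (0%N, false); (1%N, false); (3%N, false); (2%N, false)], true);
  ([:: (2%N, false); (1%N, false); (0%N, true); (3%N, true)], true);
  ([:: (0%N, false); (2%N, false); (1%N, false); (3%N, false)], true)].
Definition main_check := let W := Wlist in
  all (fun p => valid p.1) cands &&
  all (fun g => let C := filter (hyp g) W in
     has (fun p => all (concl p.1 (if p.2 then muF else rhoF)) C) cands) W.
Lemma main_checkP : main_check. Proof. vm_compute. reflexivity. Qed.
Definition idF : matF := fun i j => (i == j)%:Z.
Definition fourF : matF := fun i j => if i == j then 4%:Z else 0.
Definition trF (f : matF) : matF := fun i j => f j i.
Lemma mul_check : let W := Wlist in all (fun c => all (fun d =>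
  eqF (mulF (tab c) (tab d)) (tab (codemul c d)) && (codemul c d \in W)) W) W.
Proof. vm_compute. reflexivity. Qed.
Lemma inv_check : let W := Wlist in all (fun c => [&& codeinv c \in W,
  eqF (mulF (tab c) (tab (codeinv c))) idF & eqF (mulF (tab (codeinv c)) (tab c)) idF]) W.
Proof. vm_compute. reflexivity. Qed.
Lemma mu_check : [&& eqF (mulF muF (trF muF)) fourF, eqF (mulF (trF muF) muF) fourF,
  eqF (mulF rhoF (trF rhoF)) fourF & eqF (mulF (trF rhoF) rhoF) fourF].
Proof. vm_compute. reflexivity. Qed.


Definition T (f : matF) : mx4 := \matrix_(i < 4, j < 4) ((f i j)%:~R : rat).

Lemma T_mul f g : T f * T g = T (mulF f g).
Proof.
apply/matrixP=> i j; rewrite -mulmxE !mxE !big_ord_recl big_ord0 !mxE /=.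
by rewrite /mulF /sum4 addr0 !intrD !intrM addrA addrA.
Qed.

Lemma T_eq f g : (T f = T g) <-> eqF f g.
Proof.
split.
- move=> E; apply/allP=> i; rewrite mem_iota => /andP[_ hi]; apply/allP=> j.
  rewrite mem_iota => /andP[_ hj].
  have := congr1 (fun M : mx4 => M (Ordinal hi) (Ordinal hj)) E.
  by rewrite /= !mxE => /intr_inj ->.
- move=> /allP E; apply/matrixP=> i j; rewrite !mxE.
  have /E /allP /(_ j) : (i : nat) \in iota 0 4 by rewrite mem_iota ltn_ord.
  by rewrite mem_iota ltn_ord => /(_ isT) /eqP ->.
Qed.

Lemma T1 : T idF = 1.
Proof. apply/matrixP=> i j; rewrite !mxE /idF. case: (i =P j) => [->|h]; first by rewrite !eqxx.
have h' : (nat_of_ord i == j) = false by apply/negbTE/eqP=> e; apply: h; apply: val_inj.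
rewrite h'; try (move/eqP/negbTE: h => ->); by [].
Qed.

Definition o1 : 'I_4 := @Ordinal 4 1 isT.
Definition o2 : 'I_4 := @Ordinal 4 2 isT.
Definition o3 : 'I_4 := @Ordinal 4 3 isT.
Definition ords4 : seq 'I_4 := [:: ord0; o1; o2; o3].
Lemma nth_ords4 (i : 'I_4) : nth ord0 ords4 i = i.
Proof. by case: i => [[|[|[|[|k]]]] h] //; apply: val_inj. Qed.

Definition codeOf (s : 'S_4) (e : {ffun 'I_4 -> bool}) : code :=
  map (fun i => (val (s i), e i)) ords4.

Lemma nth_codeOf s e (i : 'I_4) : nth (0%N, false) (codeOf s e) i = (val (s i), e i).
Proof.
by rewrite (nth_map ord0) ?nth_ords4 // -[size ords4]/4%N ltn_ord.
Qed.

Lemma diag_perm (s : 'S_4) (e : {ffun 'I_4 -> bool}) :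
  diag_mx (\row_(i < 4) (-1 : rat) ^+ e i) *m perm_mx s = T (tab (codeOf s e)).
Proof.
apply/matrixP=> i j; rewrite mul_diag_mx !mxE /tab nth_codeOf /=.
case: (s i =P j) => [->|h].
  by rewrite !eqxx; case: (e i); rewrite ?mulr1.
have h1 : (s i == j) = false by apply/eqP.
have h2 : (val (s i) == val j) = false by apply/eqP => q; apply: h; apply: val_inj.
by rewrite h2 ?h1 ?mulr0.
Qed.

Lemma prod_count (s : 'S_4) (e : {ffun 'I_4 -> bool}) :
  (\prod_(i < 4) (-1 : rat) ^+ e i == 1) = ~~ odd (count snd (codeOf s e)).
Proof.
rewrite !big_ord_recl big_ord0 /=.
have -> : lift ord0 ord0 = o1 :> 'I_4 by apply: val_inj.
have -> : lift ord0 (lift ord0 ord0) = o2 :> 'I_4 by apply: val_inj.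
have -> : lift ord0 (lift ord0 (lift ord0 ord0)) = o3 :> 'I_4 by apply: val_inj.
by case: (e ord0); case: (e o1); case: (e o2); case: (e o3); rewrite /= ?mulr1 ?mulN1r ?opprK //= ?(eqr_opp 1 1) -?eqr_oppLR;
  apply/negbTE; rewrite -?eqr_oppLR ?eqr_opp; apply/negP => /eqP; apply/eqP; rewrite -subr_eq0 opprK -?mulr2n ?pnatr_eq0.
Qed.

Lemma codeOf_valid (s : 'S_4) (e : {ffun 'I_4 -> bool}) :
  valid (codeOf s e) = (\prod_(i < 4) (-1 : rat) ^+ e i == 1).
Proof.
rewrite (prod_count s) /valid.
have -> : size (codeOf s e) == 4%N by [].
have -> : uniq (map fst (codeOf s e)).
  rewrite -map_comp (map_inj_uniq (f := (fun i : 'I_4 => val (s i)))) //.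
  by move=> x y /val_inj /perm_inj.
by rewrite /= !ltn_ord.
Qed.

Lemma mem_P8 p : (p.1 < 4)%N -> p \in P8.
Proof. by case: p => [[|[|[|[|k]]]] []]. Qed.

Lemma mem_codes c : all (fun p => p.1 < 4)%N c -> c \in codes (size c).
Proof.
elim: c => [|p c IH] //= /andP[hp hc].
change (p :: c \in [seq p :: c | p <- P8, c <- codes (size c)]).
by apply: allpairs_f; [apply: mem_P8 | apply: IH].
Qed.

Lemma mem_W c : (c \in Wlist) = valid c.
Proof.
rewrite /Wlist mem_filter; case hv: (valid c); last by [].
case/and4P: hv => /eqP hs _ ha _.
by have := @mem_codes c ha; rewrite hs => ->.
Qed.

Lemma codeOf_surj c : valid c -> exists s e, c = codeOf s e.
Proof.
case/and4P=> /eqP hs hu ha _.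
pose f := fun i : 'I_4 => (inord (nth 0%N (map fst c) i) : 'I_4).
have hlt : forall i : 'I_4, (nth 0%N (map fst c) i < 4)%N.
  move=> i; rewrite (nth_map (0%N, false)) ?hs //.
  by move/allP: ha; apply; rewrite mem_nth ?hs.
have finj : injective f.
  move=> x y /(congr1 (@nat_of_ord 4)); rewrite /f !inordK // => E.
  apply: val_inj; apply/eqP; rewrite -(nth_uniq 0%N _ _ hu) ?size_map ?hs ?ltn_ord //.
  by apply/eqP.
exists (perm finj), [ffun i : 'I_4 => nth false (map snd c) (nat_of_ord i)].
apply: (@eq_from_nth _ (0%N, false)); first by rewrite hs.
move=> i; rewrite hs => hi.
have -> : i = nat_of_ord (Ordinal hi) by [].
rewrite nth_codeOf permE ffunE /f.
rewrite [\val _](inordK (hlt (Ordinal hi))) /=.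
rewrite (nth_map (0%N, false)) ?hs // (nth_map (0%N, false)) ?hs //.
by case: (nth _ c _).
Qed.

Lemma WD4E A : WD4 A <-> exists2 c, c \in Wlist & A = T (tab c).
Proof.
split.
- case/existsP=> s /existsP[e /andP[hp /eqP ->]].
  exists (codeOf s e); last exact: diag_perm.
  by rewrite mem_W codeOf_valid.
- case=> c; rewrite mem_W => hv ->.
  have [s [e hc]] := codeOf_surj c hv.
  apply/existsP; exists s; apply/existsP; exists e.
  by rewrite -(codeOf_valid s) -hc hv diag_perm hc eqxx.
Qed.

Lemma T_mulW c d : c \in Wlist -> d \in Wlist ->
  T (tab c) * T (tab d) = T (tab (codemul c d)) /\ codemul c d \in Wlist.
Proof.
move=> hc hd; have /allP/(_ c hc)/allP/(_ d hd)/andP[e m] := mul_check.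
by split=> //; rewrite T_mul; apply/T_eq.
Qed.

Lemma TW_unit c : c \in Wlist ->
  [/\ T (tab c) \is a GRing.unit, (T (tab c))^-1 = T (tab (codeinv c)) & codeinv c \in Wlist].
Proof.
move=> hc; have /allP/(_ c hc)/and3P[m e1 e2] := inv_check.
have E1 : T (tab c) * T (tab (codeinv c)) = 1 by rewrite T_mul -T1; apply/T_eq.
have E2 : T (tab (codeinv c)) * T (tab c) = 1 by rewrite T_mul -T1; apply/T_eq.
have u : T (tab c) \is a GRing.unit.
  by apply/unitrP; exists (T (tab (codeinv c))).
split=> //.
by rewrite -[LHS]mulr1 -E1 mulrA mulVr // mul1r.
Qed.

Lemma T_four : T fourF = 4%:R *: 1.
Proof.
apply/matrixP=> i j; rewrite !mxE /fourF.
case: (i =P j) => [->|h]; first by rewrite !eqxx mulr1.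
have h1 : (i == j) = false by apply/eqP.
have h2 : (nat_of_ord i == j) = false by apply/eqP => q; apply: h; apply: val_inj.
by rewrite h2 ?h1 mulr0.
Qed.

Lemma unit_half (f : matF) : eqF (mulF f (trF f)) fourF -> eqF (mulF (trF f) f) fourF ->
  (1 / 2 : rat) *: T f \is a GRing.unit.
Proof.
move=> e e'; apply/unitrP; exists ((1 / 2 : rat) *: T (trF f)).
have E : T f * T (trF f) = 4%:R *: 1 by rewrite T_mul -T_four; apply/T_eq.
have E' : T (trF f) * T f = 4%:R *: 1 by rewrite T_mul -T_four; apply/T_eq.
split; rewrite -scalerAl -scalerAr scalerA ?E ?E' scalerA;
  have -> : (1 / 2 * (1 / 2) * 4 : rat) = 1 by apply/eqP; vm_compute.
all: by rewrite scale1r.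
Qed.

Lemma mu_T : mu = (1 / 2 : rat) *: T muF. Proof. by []. Qed.
Lemma rho_T : rho = (1 / 2 : rat) *: T rhoF. Proof. by []. Qed.

Lemma half_neq0 : (1 / 2 : rat) != 0. Proof. by apply/eqP; vm_compute. Qed.

Lemma mu_unit : mu \is a GRing.unit.
Proof. by case/and4P: mu_check => *; rewrite mu_T unit_half. Qed.
Lemma rho_unit : rho \is a GRing.unit.
Proof. by case/and4P: mu_check => *; rewrite rho_T unit_half. Qed.

Lemma conj_T w h : w \in Wlist -> h \in Wlist ->
  T (tab w) * T (tab h) * (T (tab w))^-1 = T (tab (conjc w h)) /\ conjc w h \in Wlist.
Proof.
move=> hw hh; case: (TW_unit w hw) => _ -> hi.
case: (T_mulW w h hw hh) => -> hm; case: (T_mulW _ _ hm hi) => -> hc.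
by split.
Qed.

Lemma hyp_bridge g h : g \in Wlist -> h \in Wlist ->
  mut (T (tab h)) = T (tab g) * T (tab h) * (T (tab g))^-1 -> hyp g h.
Proof.
move=> hg hh; case: (conj_T g h hg hh) => -> _.
rewrite /mut /conjm => H.
have := congr1 (fun M => M * mu) H; rewrite /= mulrVK ?mu_unit //.
rewrite mu_T -scalerAl -scalerAr => /(scalerI half_neq0).
by rewrite !T_mul => /T_eq.
Qed.

Lemma concl_bridge (a : matF) k : eqF (mulF a (tab k)) (mulF (tab k) a) ->
  (1 / 2 : rat) *: T a \is a GRing.unit ->
  conjm ((1 / 2 : rat) *: T a) (T (tab k)) = T (tab k).
Proof.
move=> e u; rewrite /conjm.
have -> : (1 / 2 : rat) *: T a * T (tab k) = T (tab k) * ((1 / 2 : rat) *: T a).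
  by rewrite -scalerAl -scalerAr !T_mul; congr (_ *: _); apply/T_eq.
by rewrite mulrK.
Qed.

Lemma core g : g \in Wlist -> exists w, exists b : bool, w \in Wlist /\
  forall h, h \in Wlist -> hyp g h -> concl w (if b then muF else rhoF) h.
Proof.
move=> hg; have /andP[/allP hc /allP hall] := main_checkP.
have /hasP[p pc /allP pa] := hall g hg.
exists p.1, p.2; split; first by rewrite mem_W; apply: hc.
by move=> h hh hy; apply: pa; rewrite mem_filter hy hh.
Qed.

Theorem theorem6p1 (F : fieldType) (L : splittingFieldType F) (E : {subfield L})
    (hE : galois 1%VS E) (phi : gal_of E -> 'M[rat]_4) :
  hom_into ('Gal(E / 1%VS))%g WD4 phi ->
  W_conjugate ('Gal(E / 1%VS))%g phi (fun x => mut (phi x)) ->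
  exists2 alpha : 'M[rat]_4 -> 'M[rat]_4,
    alpha = mut \/ alpha = rhot &
    exists psi : gal_of E -> 'M[rat]_4,
      hom_into ('Gal(E / 1%VS))%g (Fix alpha) psi /\
      W_conjugate ('Gal(E / 1%VS))%g phi psi.
Proof.
move=> [hW hmul] [g /WD4E [cg hcg ->] hconj].
have [w [b [hw hcore]]] := core cg hcg.
pose Tw := T (tab w).
have [uw _ _] := TW_unit w hw.
exists (if b then mut else rhot); first by case: (b); [left | right].
exists (fun x => Tw * phi x * Tw^-1); split; last first.
  by exists Tw => //; apply/WD4E; exists w.
split; last first.
  move=> x y hx hy; rewrite hmul //.
  by rewrite -!mulrA; congr (_ * _); rewrite !mulrA mulrVK.
move=> x hx.
have /WD4E [cx hcx ephi] := hW x hx.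
have hy : hyp cg cx.
  apply: (hyp_bridge cg cx hcg hcx); rewrite -ephi; exact: hconj.
have hcl := hcore cx hcx hy.
rewrite ephi; case: (conj_T w cx hw hcx) => -> hk.
apply/andP; split; first by apply/WD4E; exists (conjc w cx).
apply/eqP; move: hcl; case: (b) => hcl.
- rewrite /mut mu_T; apply: concl_bridge; first exact: hcl.
  by rewrite -mu_T mu_unit.
- rewrite /rhot rho_T; apply: concl_bridge; first exact: hcl.
  by rewrite -rho_T rho_unit.
Qed.
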